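(* Let $T>0$ and let $F,G:[0,T]\to\mathbb{R}$ be continuously differentiable functions with $F(0)=0$ and $F(t)>0$ for $t\in(0,T]$. For $\varepsilon>0$ and $t\in(0,T]$ put $$N_\varepsilon(t)=\int_0^t\exp\Big\{-\frac1\varepsilon\int_s^tF(v)\,dv\Big\}G(s)\,ds.$$ Then for any $t\in(0,T]$, as $\varepsilon\to0$, $$N_\varepsilon(t)=\varepsilon\,\frac{G(t)}{F(t)}\big(1+O(\varepsilon)\big).$$ *)

(* Defs.v *)
From Stdlib Require Import Reals Lra.
From Coquelicot Require Import Coquelicot.
Open Scope R_scope.

Definition C1_on (a b : R) (f : R -> R) : Prop :=
  exists df : R -> R,
    (forall t, a <= t <= b ->
       filterlim (fun h => (f (t + h) - f t) / h)
         (within (fun h => h <> 0 /\ a <= t + h <= b) (locally 0))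
         (locally (df t))) /\
    (forall t, a <= t <= b ->
       filterlim df (within (fun x => a <= x <= b) (locally t))
         (locally (df t))).

Definition Neps (F G : R -> R) (eps t : R) : R :=
  RInt (fun s => exp (- (1 / eps) * RInt F s t) * G s) 0 t.

(* Main.v *)
Require Import Defs.
From Stdlib Require Import Reals Lra.
From Coquelicot Require Import Coquelicot.
Open Scope R_scope.

Lemma ballR (x e y : R) : ball x e y <-> Rabs (y - x) < e.
Proof. unfold ball; simpl; unfold AbsRing_ball, abs, minus, plus, opp; simpl. tauto. Qed.

Lemma ptLip (T : R) f x : C1_on 0 T f -> 0 <= x <= T ->
  exists d K, 0 < d /\ 0 <= K /\ forall y, 0 <= y <= T -> Rabs (y - x) < d ->
    Rabs (f y - f x) <= K * Rabs (y - x).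
Proof.
  intros [df [Hd _]] Hx. specialize (Hd x Hx).
  apply filterlim_locally with (eps := mkposreal 1 Rlt_0_1) in Hd.
  destruct Hd as [e He].
  exists e, (Rabs (df x) + 1). split; [apply cond_pos|split; [pose proof (Rabs_pos (df x)); lra|]].
  intros y Hy Hyx.
  destruct (Req_dec y x) as [E|E].
  { subst. replace (f x - f x) with 0 by ring. rewrite Rminus_diag, Rabs_R0. lra. }
  assert (Hb : ball 0 e (y - x)) by (apply ballR; now rewrite Rminus_0_r).
  specialize (He _ Hb). simpl in He.
  assert (Hh : y - x <> 0 /\ 0 <= x + (y - x) <= T) by (split; [lra| replace (x + (y-x)) with y by ring; lra]).
  specialize (He Hh). apply (proj1 (ballR _ _ _)) in He. simpl in He.
  replace (x + (y - x)) with y in He by ring.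
  assert (Hn : Rabs (y - x) > 0) by (apply Rabs_pos_lt; lra).
  replace (f y - f x) with (((f y - f x) / (y - x)) * (y - x)) by (field; lra).
  rewrite Rabs_mult. apply Rmult_le_compat_r; [lra|].
  pose proof (Rabs_triang_inv ((f y - f x) / (y - x)) (df x)). lra.
Qed.

Definition clamp (T x : R) := Rmax 0 (Rmin T x).

Lemma clamp_in T x : 0 <= T -> 0 <= clamp T x <= T.
Proof. intros; unfold clamp, Rmax, Rmin; repeat destruct Rle_dec; lra. Qed.

Lemma clamp_id T x : 0 <= x <= T -> clamp T x = x.
Proof. intros; unfold clamp, Rmax, Rmin; repeat destruct Rle_dec; lra. Qed.

Lemma clamp_lip T x y : 0 <= T -> Rabs (clamp T y - clamp T x) <= Rabs (y - x).
Proof. intros; unfold clamp, Rmax, Rmin, Rabs; repeat destruct Rle_dec; repeat destruct Rcase_abs; lra. Qed.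

Lemma clamp_cont T f x : 0 < T -> C1_on 0 T f -> continuous (fun y => f (clamp T y)) x.
Proof.
  intros HT Hf.
  destruct (ptLip T f (clamp T x) Hf (clamp_in T x (Rlt_le _ _ HT))) as [d [K [Hd [HK HL]]]].
  apply filterlim_locally. intros eps.
  assert (Hp : 0 < Rmin d (eps / (K + 1))).
  { apply Rmin_pos; [lra|]. apply Rdiv_lt_0_compat; [apply cond_pos|lra]. }
  exists (mkposreal _ Hp). intros y Hy. apply (proj1 (ballR _ _ _)) in Hy. simpl in Hy.
  apply ballR.
  pose proof (clamp_lip T x y (Rlt_le _ _ HT)).
  pose proof (Rmin_l d (eps / (K + 1))). pose proof (Rmin_r d (eps / (K + 1))).
  assert (Ha1 : Rabs (f (clamp T y) - f (clamp T x)) <= K * Rabs (clamp T y - clamp T x)).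
  { apply HL. apply clamp_in; lra. lra. }
  assert (Ha2 : K * Rabs (y - x) <= K * (eps / (K + 1))).
  { apply Rmult_le_compat_l; lra. }
  assert (Ha3 : K * (eps / (K + 1)) < eps).
  { pose proof (cond_pos eps).
    replace (K * (eps / (K + 1))) with (eps - eps / (K + 1)) by (field; lra).
    assert (0 < eps / (K + 1)) by (apply Rdiv_lt_0_compat; lra). lra. }
  pose proof (Rmult_le_compat_l K _ _ HK (clamp_lip T x y (Rlt_le _ _ HT))).
  lra.
Qed.

Lemma exp_le x y : x <= y -> exp x <= exp y.
Proof. intros [H|H]; [left; now apply exp_increasing| subst; lra]. Qed.

Lemma exp_bounds y : 0 < y -> exp (- y) * y <= 1 /\ exp (- y) * y ^ 2 <= 4.
Proof.
  intros Hy. rewrite exp_Ropp.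
  pose proof (exp_pos y). pose proof (exp_ineq1 y ltac:(lra)).
  pose proof (exp_ineq1 (y/2) ltac:(lra)).
  assert (E2 : exp y = exp (y/2) * exp (y/2)) by (rewrite <- exp_plus; f_equal; field).
  pose proof (exp_pos (y/2)).
  split.
  - apply Rmult_le_reg_l with (exp y); [lra|]. rewrite <- Rmult_assoc, Rinv_r by lra. lra.
  - apply Rmult_le_reg_l with (exp y); [lra|]. rewrite <- Rmult_assoc, Rinv_r by lra.
    rewrite E2. assert (y/2 < exp (y/2)) by lra. nra.
Qed.

Lemma cont_mul (f g : R -> R) (x : R) : continuous f x -> continuous g x -> continuous (fun y => f y * g y) x.
Proof. intros; now apply (continuous_mult f g). Qed.
Lemma cont_sub (f g : R -> R) (x : R) : continuous f x -> continuous g x -> continuous (fun y => f y - g y) x.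
Proof. intros; now apply (continuous_minus f g). Qed.
Lemma cont_abs (f : R -> R) (x : R) : continuous f x -> continuous (fun y => Rabs (f y)) x.
Proof. intros; apply (continuous_comp f Rabs); auto. apply continuous_Rabs. Qed.
Lemma cont_cst (c x : R) : continuous (fun _ : R => c) x.
Proof. apply continuous_const. Qed.
Lemma cont_id' (x : R) : continuous (fun y : R => y) x.
Proof. apply continuous_id. Qed.

Lemma exc (f : R -> R) a b : (forall x, continuous f x) -> ex_RInt f a b.
Proof. intros H; apply (ex_RInt_continuous (V := R_CompleteNormedModule)); intros; apply H. Qed.

Lemma RInt_sub' (f g : R -> R) a b : ex_RInt f a b -> ex_RInt g a b ->
  RInt (fun x => f x - g x) a b = RInt f a b - RInt g a b.
Proof. intros; exact (RInt_minus (V := R_CompleteNormedModule) f g a b H H0). Qed.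

Lemma RInt_cmul (f : R -> R) c a b : ex_RInt f a b -> RInt (fun x => c * f x) a b = c * RInt f a b.
Proof. intros; exact (RInt_scal (V := R_CompleteNormedModule) f a b c H). Qed.

Lemma RInt_abs_le f g a b : a <= b -> ex_RInt f a b -> ex_RInt g a b ->
  (forall x, a < x < b -> Rabs (f x) <= g x) -> Rabs (RInt f a b) <= RInt g a b.
Proof.
  intros Hab Hf Hg H.
  assert (H1 : RInt f a b <= RInt g a b).
  { apply RInt_le; auto. intros x Hx; specialize (H x Hx). pose proof (Rle_abs (f x)); lra. }
  assert (H2 : RInt (fun x => - g x) a b <= RInt f a b).
  { apply RInt_le; auto. apply ex_RInt_opp in Hg. exact Hg.
    intros x Hx; specialize (H x Hx). pose proof (Rle_abs (- f x)). rewrite Rabs_Ropp in H0. lra. }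
  rewrite (RInt_opp g) in H2 by auto. change (opp (RInt g a b)) with (- RInt g a b) in H2.
  apply Rabs_le; lra.
Qed.

Section Core.
Variables (f g : R -> R) (t a m K : R).
Hypotheses (Hfc : forall x, continuous f x) (Hgc : forall x, continuous g x)
  (Hf0 : forall x, 0 <= f x) (Ha : 0 <= a < t) (Hm : 0 < m) (HK : 0 <= K)
  (Hfm : forall s, a <= s <= t -> m <= f s)
  (HfL : forall s, a <= s <= t -> Rabs (f s - f t) <= K * (t - s))
  (HgL : forall s, a <= s <= t -> Rabs (g s - g t) <= K * (t - s)).

Variable eps : R.
Hypothesis Heps : 0 < eps.

Definition Phi s := RInt f s t.
Definition E s := exp (- (1 / eps) * Phi s).

Lemma Phi_der s : is_derive Phi s (- f s).
Proof.
  apply (is_derive_RInt' f Phi s t).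
  - exists (mkposreal 1 Rlt_0_1). intros y _. apply (RInt_correct (V := R_CompleteNormedModule)). apply exc; auto.
  - apply Hfc.
Qed.

Lemma E_der s : is_derive E s (f s * E s / eps).
Proof.
  pose proof (is_derive_comp exp (fun s => - (1 / eps) * Phi s) s _ _ (is_derive_exp _)
     (is_derive_scal _ _ (- (1 / eps)) _ (Phi_der s))) as H.
  unfold E. replace (f s * exp (- (1 / eps) * Phi s) / eps) with
    (scal (- (1 / eps) * - f s) (exp (- (1 / eps) * Phi s))).
  exact H.
  unfold scal; simpl; unfold mult; simpl. field. lra.
Qed.

Lemma E_cont s : continuous E s.
Proof. apply (ex_derive_continuous (K := R_AbsRing) (V := R_NormedModule)). eexists. apply E_der. Qed.

Lemma E_pos s : 0 < E s.
Proof. apply exp_pos. Qed.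

Lemma Phi_t : Phi t = 0.
Proof. unfold Phi. now rewrite RInt_point. Qed.

Lemma E_t : E t = 1.
Proof. unfold E. rewrite Phi_t, Rmult_0_r. apply exp_0. Qed.

Lemma Phi_mono s : s <= a -> Phi a <= Phi s.
Proof.
  intros Hs. unfold Phi.
  rewrite <- (RInt_Chasles (V := R_CompleteNormedModule) f s a t) by (apply exc; auto).
  change (plus ?x ?y) with (x + y).
  assert (0 <= RInt f s a). { apply RInt_ge_0; auto. apply exc; auto. }
  lra.
Qed.

Lemma Phi_a : m * (t - a) <= Phi a.
Proof.
  unfold Phi.
  assert (H : RInt (fun _ => m) a t <= RInt f a t).
  { apply RInt_le; try lra; try (apply exc; auto; intros; apply cont_cst).
    intros x Hx; apply Hfm; lra. }
  rewrite RInt_const in H. change (scal (t - a) m) with ((t - a) * m) in H. lra.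
Qed.

Definition I0 := RInt E a t.
Definition I1 := RInt (fun s => (t - s) * E s) a t.

Lemma J0 : RInt (fun s => f s * E s) a t = eps * (1 - E a).
Proof.
  apply is_RInt_unique.
  replace (eps * (1 - E a)) with (minus (eps * E t) (eps * E a)).
  2:{ rewrite E_t. unfold minus, plus, opp; simpl. ring. }
  apply (is_RInt_derive (fun s => eps * E s)).
  - intros x _. replace (f x * E x) with (eps * (f x * E x / eps)) by (field; lra).
    apply is_derive_scal. apply E_der.
  - intros x _. apply cont_mul; auto. apply E_cont.
Qed.

Lemma J1 : RInt (fun s => (t - s) * f s * E s - eps * E s) a t = - eps * (t - a) * E a.
Proof.
  apply is_RInt_unique.
  replace (- eps * (t - a) * E a) with
    (minus (eps * ((t - t) * E t)) (eps * ((t - a) * E a))).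
  2:{ unfold minus, plus, opp; simpl. ring. }
  apply (is_RInt_derive (fun s => eps * ((t - s) * E s))).
  - intros x _.
    replace ((t - x) * f x * E x - eps * E x) with
      (eps * (plus (mult (-1) (E x)) (mult (t - x) (f x * E x / eps)))).
    2:{ unfold plus, mult; simpl. field. lra. }
    apply is_derive_scal.
    apply (is_derive_mult (fun s => t - s) E).
    + auto_derive; auto; ring.
    + apply E_der.
    + intros; apply Rmult_comm.
  - intros x _. apply cont_sub; [|apply cont_mul; [apply cont_cst|apply E_cont]].
    apply cont_mul; [|apply E_cont]. apply cont_mul; auto.
    apply cont_sub; [apply cont_cst|apply cont_id'].
Qed.


Ltac cc := intros; repeat match goal with
  | |- continuous (fun _ => ?c) _ => apply cont_cst
  | |- continuous (fun y => y) _ => apply cont_id'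
  | |- continuous E _ => apply E_cont
  | |- continuous (fun y => E y) _ => apply E_cont
  | |- continuous f _ => apply Hfc
  | |- continuous (fun y => f y) _ => apply Hfc
  | |- continuous g _ => apply Hgc
  | |- continuous (fun y => g y) _ => apply Hgc
  | |- continuous (fun y => @?F y * @?G y) _ => apply (cont_mul F G)
  | |- continuous (fun y => @?F y - @?G y) _ => apply (cont_sub F G)
  | |- continuous (fun y => Rabs (@?F y)) _ => apply (cont_abs F)
  end.
Ltac ex := apply exc; cc.

Lemma I0_bound : I0 <= eps / m.
Proof.
  assert (H : RInt (fun s => m * E s) a t <= RInt (fun s => f s * E s) a t).
  { apply RInt_le; try lra; try ex. intros x Hx. pose proof (E_pos x).
    apply Rmult_le_compat_r; [lra| apply Hfm; lra]. }
  rewrite J0, RInt_cmul in H by ex. fold I0 in H. pose proof (E_pos a).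
  assert (0 <= eps * E a) by (apply Rmult_le_pos; lra).
  apply Rmult_le_reg_l with m; [lra|]. replace (m * (eps / m)) with eps by (field; lra). lra.
Qed.

Lemma I1_bound : I1 <= eps ^ 2 / m ^ 2.
Proof.
  pose proof J1 as H1. rewrite RInt_sub', RInt_cmul in H1 by ex. fold I0 in H1.
  assert (H : RInt (fun s => m * ((t - s) * E s)) a t <= RInt (fun s => (t - s) * f s * E s) a t).
  { apply RInt_le; try lra; try ex. intros x Hx. pose proof (E_pos x).
    pose proof (Hfm x ltac:(lra)). assert (0 <= t - x) by lra.
    replace ((t - x) * f x * E x) with (f x * ((t - x) * E x)) by ring.
    apply Rmult_le_compat_r; [apply Rmult_le_pos; lra| lra]. }
  rewrite RInt_cmul in H by ex. fold I1 in H. pose proof (E_pos a).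
  pose proof I0_bound.
  assert (0 <= eps * (t - a) * E a) by (apply Rmult_le_pos; [apply Rmult_le_pos|]; lra).
  assert (m * I1 <= eps * I0) by lra.
  assert (m * I1 <= eps * (eps / m)) by (apply Rle_trans with (eps * I0); [lra| apply Rmult_le_compat_l; lra]).
  apply Rmult_le_reg_l with m; [lra|]. replace (m * (eps ^ 2 / m ^ 2)) with (eps * (eps / m)) by (field; lra). lra.
Qed.

Definition B := RInt (fun s => Rabs (g s)) 0 a.

Lemma core_bound :
  Rabs (RInt (fun s => E s * g s) 0 t - eps * (g t / f t)) <=
  (4 * B / (m * (t - a)) ^ 2 + K / m ^ 2 + Rabs (g t / f t) * (K / m ^ 2 + 1 / (m * (t - a)))) * eps ^ 2.
Proof.
  set (c := m * (t - a)).
  assert (Hc : 0 < c) by (unfold c; apply Rmult_lt_0_compat; lra).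
  set (Ea := E a).
  assert (HEa : Ea <= exp (- (c / eps))).
  { unfold Ea, E. apply exp_le. pose proof Phi_a. fold c in H.
    replace (- (c / eps)) with (- (1 / eps) * c) by (field; lra).
    assert (0 < 1 / eps) by (apply Rdiv_lt_0_compat; lra). nra. }
  destruct (exp_bounds (c / eps)) as [X1 X2]; [apply Rdiv_lt_0_compat; lra|].
  assert (HEa1 : eps * Ea <= eps ^ 2 / c).
  { apply Rmult_le_reg_l with (c / eps); [apply Rdiv_lt_0_compat; lra|].
    replace (c / eps * (eps ^ 2 / c)) with eps by (field; lra).
    replace (c / eps * (eps * Ea)) with (Ea * c) by (field; lra).
    assert (Ea * (c / eps) <= 1).
    { apply Rle_trans with (exp (- (c / eps)) * (c / eps)); auto.
      apply Rmult_le_compat_r; [left; apply Rdiv_lt_0_compat; lra| auto]. }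
    replace (Ea * c) with (eps * (Ea * (c / eps))) by (field; lra).
    assert (eps * (Ea * (c / eps)) <= eps * 1) by (apply Rmult_le_compat_l; lra). lra. }
  assert (HEa2 : Ea <= 4 * eps ^ 2 / c ^ 2).
  { assert (Ea * (c / eps) ^ 2 <= 4).
    { apply Rle_trans with (exp (- (c / eps)) * (c / eps) ^ 2); auto.
      apply Rmult_le_compat_r; [apply pow2_ge_0| auto]. }
    replace (Ea) with (Ea * (c / eps) ^ 2 * (eps ^ 2 / c ^ 2)) by (field; lra).
    replace (4 * eps ^ 2 / c ^ 2) with (4 * (eps ^ 2 / c ^ 2)) by (field; lra).
    apply Rmult_le_compat_r; [|auto]. apply Rlt_le, Rdiv_lt_0_compat; apply pow_lt; lra. }
  rewrite <- (RInt_Chasles (V := R_CompleteNormedModule) _ 0 a t) by ex.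
  change (plus ?x ?y) with (x + y).
  set (H0 := RInt (fun s => E s * g s) 0 a).
  assert (HB : 0 <= B) by (apply RInt_ge_0; [lra| ex | intros; apply Rabs_pos]).
  assert (HH0 : Rabs H0 <= Ea * B).
  { unfold B. rewrite <- RInt_cmul by ex. apply RInt_abs_le; try lra; try ex.
    intros x Hx. rewrite Rabs_mult, (Rabs_pos_eq (E x)) by (left; apply E_pos).
    apply Rmult_le_compat_r; [apply Rabs_pos|]. unfold Ea, E. apply exp_le.
    pose proof (Phi_mono x ltac:(lra)). assert (0 < 1 / eps) by (apply Rdiv_lt_0_compat; lra). nra. }
  assert (eR1 : RInt (fun s => (g s - g t) * E s) a t = RInt (fun s => E s * g s) a t - g t * I0).
  { unfold I0. rewrite <- RInt_cmul, <- RInt_sub' by ex. apply RInt_ext. intros. match goal with |- ?u = ?v => change (u = v :> R) end. ring. }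
  assert (eR2 : RInt (fun s => (f t - f s) * E s) a t = f t * I0 - RInt (fun s => f s * E s) a t).
  { unfold I0. rewrite <- RInt_cmul, <- RInt_sub' by ex. apply RInt_ext. intros; match goal with |- ?u = ?v => change (u = v :> R) end. ring. }
  rewrite J0 in eR2. fold Ea in eR2.
  set (R1 := RInt (fun s => (g s - g t) * E s) a t) in *.
  set (R2 := RInt (fun s => (f t - f s) * E s) a t) in *.
  assert (HKI : RInt (fun s => K * ((t - s) * E s)) a t = K * I1) by (unfold I1; apply RInt_cmul; ex).
  assert (HR1 : Rabs R1 <= K * I1).
  { rewrite <- HKI. apply RInt_abs_le; try lra; try ex. intros x Hx.
    rewrite Rabs_mult, (Rabs_pos_eq (E x)) by (left; apply E_pos). rewrite <- Rmult_assoc.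
    apply Rmult_le_compat_r; [left; apply E_pos| apply HgL; lra]. }
  assert (HR2 : Rabs R2 <= K * I1).
  { rewrite <- HKI. apply RInt_abs_le; try lra; try ex. intros x Hx.
    rewrite Rabs_mult, (Rabs_pos_eq (E x)) by (left; apply E_pos). rewrite <- Rmult_assoc.
    rewrite Rabs_minus_sym.
    apply Rmult_le_compat_r; [left; apply E_pos| apply HfL; lra]. }
  assert (Hft : 0 < f t) by (apply Rlt_le_trans with m; [lra| apply Hfm; lra]).
  set (q := g t / f t).
  assert (Eq : H0 + RInt (fun s => E s * g s) a t - eps * q = H0 + R1 + q * (R2 - eps * Ea)).
  { unfold q. rewrite eR2. replace (RInt (fun s => E s * g s) a t) with (R1 + g t * I0) by lra.
    field. lra. }
  rewrite Eq.
  pose proof I1_bound as HI1.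
  assert (HKI1 : K * I1 <= K * (eps ^ 2 / m ^ 2)) by (apply Rmult_le_compat_l; lra).
  pose proof (Rabs_triang (H0 + R1) (q * (R2 - eps * Ea))).
  pose proof (Rabs_triang H0 R1).
  rewrite Rabs_mult in H.
  pose proof (Rabs_triang R2 (- (eps * Ea))). rewrite Rabs_Ropp in H2.
  rewrite (Rabs_pos_eq (eps * Ea)) in H2 by (left; apply Rmult_lt_0_compat; [lra| apply E_pos]).
  assert (Hq : Rabs q * Rabs (R2 - eps * Ea) <= Rabs q * (K * (eps ^ 2 / m ^ 2) + eps ^ 2 / c)).
  { apply Rmult_le_compat_l; [apply Rabs_pos|]. unfold Rminus in *. lra. }
  assert (HH0' : Ea * B <= 4 * eps ^ 2 / c ^ 2 * B) by (apply Rmult_le_compat_r; lra).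
  assert (Hfin : Rabs (H0 + R1 + q * (R2 - eps * Ea)) <=
     4 * eps ^ 2 / c ^ 2 * B + K * (eps ^ 2 / m ^ 2) + Rabs q * (K * (eps ^ 2 / m ^ 2) + eps ^ 2 / c)).
  { lra. }
  eapply Rle_trans; [exact Hfin|]. right. field. split; lra.
Qed.

End Core.

Theorem lemma2 (T : R) (F G : R -> R) :
  0 < T ->
  C1_on 0 T F -> C1_on 0 T G ->
  F 0 = 0 ->
  (forall t, 0 < t <= T -> 0 < F t) ->
  forall t, 0 < t <= T ->
    exists C delta : R, 0 < delta /\
      forall eps, 0 < eps < delta ->
        Rabs (Neps F G eps t - eps * (G t / F t)) <= C * eps ^ 2.
Proof.
  intros HT HF HG HF0 Fpos t Ht.
  set (Fc := fun y => F (clamp T y)). set (Gc := fun y => G (clamp T y)).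
  assert (Hfc : forall x, continuous Fc x) by (intros; apply clamp_cont; auto).
  assert (Hgc : forall x, continuous Gc x) by (intros; apply clamp_cont; auto).
  assert (Hf0 : forall x, 0 <= Fc x).
  { intros x. unfold Fc. destruct (clamp_in T x ltac:(lra)) as [[Hl|Hl] Hr].
    - left; apply Fpos; lra.
    - rewrite <- Hl, HF0; lra. }
  assert (Ht' : 0 <= t <= T) by lra.
  destruct (ptLip T F t HF Ht') as [dF [KF [HdF [HKF HLF]]]].
  destruct (ptLip T G t HG Ht') as [dG [KG [HdG [HKG HLG]]]].
  pose proof (Fpos t Ht) as Ftp.
  set (d := Rmin (Rmin (dF / 2) (dG / 2)) (Rmin t (F t / (2 * (KF + 1))))).
  assert (Hd : 0 < d).
  { unfold d. apply Rmin_pos; apply Rmin_pos; try lra. apply Rdiv_lt_0_compat; lra. }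
  assert (Hd1 : d <= dF / 2) by (unfold d; eapply Rle_trans; [apply Rmin_l| apply Rmin_l]).
  assert (Hd2 : d <= dG / 2) by (unfold d; eapply Rle_trans; [apply Rmin_l| apply Rmin_r]).
  assert (Hd3 : d <= t) by (unfold d; eapply Rle_trans; [apply Rmin_r| apply Rmin_l]).
  assert (Hd4 : d <= F t / (2 * (KF + 1))) by (unfold d; eapply Rle_trans; [apply Rmin_r| apply Rmin_r]).
  set (a := t - d).
  assert (Ha : 0 <= a < t) by (unfold a; lra).
  set (K := Rmax KF KG).
  assert (HK : 0 <= K) by (unfold K; eapply Rle_trans; [exact HKF| apply Rmax_l]).
  assert (Hcl : forall s, a <= s <= t -> clamp T s = s) by (intros; apply clamp_id; lra).
  assert (HfL : forall s, a <= s <= t -> Rabs (Fc s - Fc t) <= K * (t - s)).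
  { intros s Hs. unfold Fc. rewrite !Hcl by lra.
    assert (Rabs (s - t) = t - s) by (rewrite Rabs_minus_sym; apply Rabs_pos_eq; lra).
    eapply Rle_trans; [apply HLF; [lra| rewrite H; unfold a in Hs; lra]|]. rewrite H. apply Rmult_le_compat_r; [lra| apply Rmax_l]. }
  assert (HgL : forall s, a <= s <= t -> Rabs (Gc s - Gc t) <= K * (t - s)).
  { intros s Hs. unfold Gc. rewrite !Hcl by lra.
    assert (Rabs (s - t) = t - s) by (rewrite Rabs_minus_sym; apply Rabs_pos_eq; lra).
    eapply Rle_trans; [apply HLG; [lra| rewrite H; unfold a in Hs; lra]|]. rewrite H. apply Rmult_le_compat_r; [lra| apply Rmax_r]. }
  assert (Hfm : forall s, a <= s <= t -> F t / 2 <= Fc s).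
  { intros s Hs. unfold Fc. rewrite Hcl by lra.
    assert (Rabs (s - t) = t - s) by (rewrite Rabs_minus_sym; apply Rabs_pos_eq; lra).
    assert (H1 : Rabs (F s - F t) <= KF * (t - s)) by (rewrite <- H; apply HLF; [lra| rewrite H; unfold a in Hs; lra]).
    assert (H2 : KF * (t - s) <= KF * (F t / (2 * (KF + 1)))) by (apply Rmult_le_compat_l; unfold a in Hs; lra).
    assert (H3 : KF * (F t / (2 * (KF + 1))) <= F t / 2).
    { replace (KF * (F t / (2 * (KF + 1)))) with (F t / 2 - F t / (2 * (KF + 1))) by (field; lra).
      assert (0 < F t / (2 * (KF + 1))) by (apply Rdiv_lt_0_compat; lra). lra. }
    unfold Rabs in H1; destruct Rcase_abs in H1; lra. }
  assert (Hm : 0 < F t / 2) by lra.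
  exists ((4 * B Gc a / (F t / 2 * (t - a)) ^ 2 + K / (F t / 2) ^ 2 +
     Rabs (Gc t / Fc t) * (K / (F t / 2) ^ 2 + 1 / (F t / 2 * (t - a))))), 1.
  split; [lra|]. intros eps [He _].
  pose proof (core_bound Fc Gc t a (F t / 2) K Hfc Hgc Hf0 Ha Hm HK Hfm HfL HgL eps He) as Hb.
  assert (EFt : Fc t = F t) by (unfold Fc; rewrite clamp_id; lra).
  assert (EGt : Gc t = G t) by (unfold Gc; rewrite clamp_id; lra).
  rewrite EFt, EGt in Hb |- *.
  replace (Neps F G eps t) with (RInt (fun s => E Fc t eps s * Gc s) 0 t). exact Hb.
  unfold Neps. apply RInt_ext. intros x Hx.
  rewrite Rmin_left, Rmax_right in Hx by lra.
  unfold E, Phi, Gc. rewrite clamp_id by lra. f_equal. f_equal. f_equal.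
  apply RInt_ext. intros y Hy. rewrite Rmin_left, Rmax_right in Hy by lra.
  unfold Fc. rewrite clamp_id; lra.
Qed.
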